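(* Let $k$ be a field and $\mathsf{E}$ a left strictly locally finite $k$-linear category. Then the class of right $\mathsf{E}$-modules isomorphic to $\Upsilon_{\mathsf{E}^{op}}(\mathcal{N})$ for some locally finite right $\mathcal{C}_\mathsf{E}$-comodule $\mathcal{N}$ is closed under extensions in the category of right $\mathsf{E}$-modules (and in the category of locally finite right $\mathsf{E}$-modules): if $0\to L\to M\to N\to0$ is a short exact sequence of right $\mathsf{E}$-modules and $L,N$ belong to this class, then so does $M$.
   Context: A small $k$-linear category $\mathsf{E}$ has $k$-vector spaces $\operatorname{Hom}_\mathsf{E}(x,y)$, $k$-bilinear associative composition and identities with $\mathrm{id}_x\ne0$. A right $\mathsf{E}$-module is a $k$-linear functor $\mathsf{E}^{op}\to k\text{-Vect}$ (action maps $\operatorname{Hom}_\mathsf{E}(x,y)\otimes_kN(y)\to N(x)$); locally finite if all values are finite-dimensional. Write $x\preceq y$ if there are $n\ge1$ and objects $x=z_0,\dots,z_n=y$ with $\operatorname{Hom}_\mathsf{E}(z_{i-1},z_i)\neq0$ for all $i$; $x\prec y$ means $x\preceq y$ and not $y\preceq x$. $\mathsf{E}$ is locally finite if all Hom spaces are finite-dimensional and every $\{z:x\preceq z\preceq y\}$ is finite; left strictly locally finite if moreover for every $y$ there is a finite set $X_y$ of objects with $x\prec y$ for $x\in X_y$ such that every $f:z\to y$ with $z\prec y$ equals $\sum_{i=1}^nh_ig_i$ ($n\ge0$) with $g_i:z\to x_i$, $h_i:x_i\to y$, $x_i\in X_y$. $\mathcal{C}_\mathsf{E}=\bigoplus_{x,y}\mathcal{C}^{x,y}$,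 $\mathcal{C}^{x,y}=\operatorname{Hom}_\mathsf{E}(x,y)^*$; counit zero on $\mathcal{C}^{x,y}$ for $x\ne y$, evaluation at $\mathrm{id}_x$ on $\mathcal{C}^{x,x}$; comultiplication $\mathcal{C}^{x,y}\to\bigoplus_z\mathcal{C}^{x,z}\otimes\mathcal{C}^{z,y}$ dual to composition $g\otimes h\mapsto hg$. For a right comodule $(\mathcal{N},\nu:\mathcal{N}\to\mathcal{N}\otimes\mathcal{C}_\mathsf{E})$, $\varphi\cdot n=(\mathrm{id}\otimes\varphi)\nu(n)$. With $e_x$ evaluation at $\mathrm{id}_x$ on $\mathcal{C}^{x,x}$ (zero elsewhere) and $\mathrm{ev}_f$, for $f\in\operatorname{Hom}_\mathsf{E}(x,y)$, evaluation at $f$ on $\mathcal{C}^{x,y}$ (zero elsewhere): $\Upsilon_{\mathsf{E}^{op}}(\mathcal{N})(x)=e_x\cdot\mathcal{N}$ and $f$ acts $e_y\cdot\mathcal{N}\to e_x\cdot\mathcal{N}$ by $n\mapsto\mathrm{ev}_f\cdot n$. $\mathcal{N}$ is locally finite if $\Upsilon_{\mathsf{E}^{op}}(\mathcal{N})$ is. *)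

(* Defs.v *)
From HB Require Import structures.
From mathcomp Require Import all_boot all_algebra.
From Stdlib Require Import Relations.
From Stdlib Require List.

Set Implicit Arguments.
Unset Strict Implicit.
Unset Printing Implicit Defensive.

Import GRing.Theory.
Local Open Scope ring_scope.

(* [ccomp g h] is the composite  h g  of  g : x -> y  and  h : y -> z.       *)
Record kcat (k : fieldType) := KCat {
  cobj : Type;
  chom : cobj -> cobj -> lmodType k;
  ccomp : forall x y z, chom x y -> chom y z -> chom x z;
  cid : forall x, chom x x;
  comp_linl : forall x y z (h : chom y z) (a : k) (g1 g2 : chom x y),
      ccomp (a *: g1 + g2) h = a *: ccomp g1 h + ccomp g2 h;
  comp_linr : forall x y z (g : chom x y) (a : k) (h1 h2 : chom y z),
      ccomp g (a *: h1 + h2) = a *: ccomp g h1 + ccomp g h2;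
  compA : forall w x y z (f : chom w x) (g : chom x y) (h : chom y z),
      ccomp (ccomp f g) h = ccomp f (ccomp g h);
  comp1f : forall x y (f : chom x y), ccomp (cid x) f = f;
  compf1 : forall x y (f : chom x y), ccomp f (cid y) = f;
  idm_neq0 : forall x, cid x != 0
}.
Arguments ccomp {k E x y z} : rename.
Arguments cid {k E} x : rename.
Arguments chom {k} E : rename.

Section Category.
Variables (k : fieldType) (E : kcat k).

Definition findim (V : lmodType k) : Prop :=
  exists (n : nat) (b : 'I_n -> V), forall v : V,
    exists c : 'I_n -> k, v = \sum_(i < n) c i *: b i.

Definition hom_nz (a b : cobj E) : Prop := exists f : chom E a b, f != 0.

Definition preceq (x y : cobj E) : Prop := clos_trans (cobj E) hom_nz x y.
Definition prec (x y : cobj E) : Prop := preceq x y /\ ~ preceq y x.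

Definition locally_finite_cat : Prop :=
  (forall x y, findim (chom E x y)) /\
  (forall x y, exists s : seq (cobj E),
      forall z, preceq x z -> preceq z y -> List.In z s).

Record factor (z y : cobj E) := Factor {
  fmid : cobj E;
  fleft : chom E z fmid;
  fright : chom E fmid y
}.

Definition left_strictly_locally_finite : Prop :=
  locally_finite_cat /\
  forall y, exists Xy : seq (cobj E),
    (forall x, List.In x Xy -> prec x y) /\
    (forall z (f : chom E z y), prec z y ->
       exists l : seq (factor z y),
         (forall t, List.In t l -> List.In (fmid t) Xy) /\
         f = \sum_(t <- l) ccomp (fleft t) (fright t)).

(* Right E-modules = k-linear functors E^op -> k-Vect.                      *)
(* [mact m f] for m in M(y), f : x -> y, is M(f)(m) in M(x).                *)
Record rmod := RMod {
  mval : cobj E -> lmodType k;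
  mact : forall x y, mval y -> chom E x y -> mval x;
  mact_linl : forall x y (f : chom E x y) (a : k) (m1 m2 : mval y),
      mact (a *: m1 + m2) f = a *: mact m1 f + mact m2 f;
  mact_linr : forall x y (m : mval y) (a : k) (f1 f2 : chom E x y),
      mact m (a *: f1 + f2) = a *: mact m f1 + mact m f2;
  mact_id : forall x (m : mval x), mact m (cid x) = m;
  mact_comp : forall x y z (g : chom E x y) (h : chom E y z) (m : mval z),
      mact (mact m h) g = mact m (ccomp g h)
}.

Definition locally_finite_rmod (M : rmod) : Prop :=
  forall x, findim (mval M x).

Record rmod_hom (M N : rmod) := RModHom {
  mhom : forall x, {linear mval M x -> mval N x};
  mhom_nat : forall x y (f : chom E x y) (m : mval M y),
      mhom x (mact m f) = mact (mhom y m) f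
}.

Definition rmod_iso (M N : rmod) : Prop :=
  exists phi : rmod_hom M N, forall x, bijective (mhom phi x).

Definition short_exact (L M N : rmod) (a : rmod_hom L M) (b : rmod_hom M N)
  : Prop :=
  forall x,
    injective (mhom a x) /\
    (forall n : mval N x, exists m, mhom b x m = n) /\
    (forall m : mval M x, mhom b x m = 0 <-> exists l, mhom a x l = m).

(* Right comodules over C_E = (+)_{x,y} Hom(x,y)^*.                         *)
(* Since all Hom(x,y) are finite-dimensional, N (x) C^{x,y} is identified   *)
(* with linear maps Hom(x,y) -> N; a coaction nu is thus encoded by         *)
(*    rho x y n f = (id (x) ev_f) (nu n) = ev_f . n ,   f : x -> y,         *)
(* bilinear, of finite support in (x,y) for each n (direct sum), with the   *)
(* counit and coassociativity axioms written out componentwise.             *)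
Record rcomod := RComod {
  cval : lmodType k;
  rho : forall x y, cval -> chom E x y -> cval;
  rho_linl : forall x y (f : chom E x y) (a : k) (n1 n2 : cval),
      rho (a *: n1 + n2) f = a *: rho n1 f + rho n2 f;
  rho_linr : forall x y (n : cval) (a : k) (f1 f2 : chom E x y),
      rho n (a *: f1 + f2) = a *: rho n f1 + rho n f2;
  (* nu(n) lies in the direct sum: finitely many nonzero components *)
  rho_fin : forall n : cval, exists s : seq (cobj E * cobj E)%type,
      forall x y, ~ List.In (x, y) s -> forall f : chom E x y, rho n f = 0;
  (* counit: (id (x) eps) nu = id, eps = sum_x ev_{id_x} *)
  rho_counit : forall (n : cval) (s : seq (cobj E)), List.NoDup s ->
      (forall x, ~ List.In x s -> rho n (cid x) = 0) ->
      \sum_(x <- s) rho n (cid x) = n;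
  (* coassociativity: (nu (x) id) nu = (id (x) Delta) nu *)
  rho_coassoc : forall x z y (g : chom E x z) (h : chom E z y) (n : cval),
      rho (rho n h) g = rho n (ccomp g h);
  rho_coassoc0 : forall a b c d (g : chom E a b) (h : chom E c d) (n : cval),
      b <> c -> rho (rho n h) g = 0
}.

End Category.

Arguments rmod {k} E.
Arguments rcomod {k} E.
Arguments mact {k E} M {x y} : rename.
Arguments rho {k E} N {x y} : rename.

(* The functor Upsilon_{E^op}: Upsilon(N)(x) = e_x . N, where               *)
(* e_x . n = rho n (cid x).  We realise e_x . N as the subspace of fixed    *)
(* points of e_x (equal to its image, since e_x is idempotent by            *)
(* coassociativity).                                                        *)
Section Upsilon.
Variables (k : fieldType) (E : kcat k) (N : rcomod E) (x : cobj E).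

Definition ex (n : cval N) : cval N := rho N n (cid x).

Definition ups_pred : {pred cval N} := fun n => ex n == n.

Lemma ups_closed : subsemimod_closed ups_pred.
Proof.
have lin : forall (a : k) (n1 n2 : cval N), ex (a *: n1 + n2) = a *: ex n1 + ex n2.
  by move=> a n1 n2; rewrite /ex rho_linl.
have ex0 : ex 0 = 0.
  have := lin (-1) 0 0; rewrite scaler0 addr0 => ->.
  by rewrite scaleN1r addNr.
split; first split.
- by rewrite unfold_in /ups_pred ex0.
- move=> u v; rewrite !unfold_in /ups_pred => /eqP hu /eqP hv.
  by have := lin 1 u v; rewrite !scale1r hu hv => ->.
- move=> a u; rewrite !unfold_in /ups_pred => /eqP hu.
  by have := lin a u 0; rewrite !addr0 ex0 addr0 hu => ->.
Qed.

HB.instance Definition _ := GRing.isSubmodClosed.Build k (cval N) ups_pred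
  ups_closed.

Record upsT := UpsT { uval : cval N; _ : uval \in ups_pred }.

HB.instance Definition _ := [isSub for uval].
HB.instance Definition _ := [Choice of upsT by <:].
HB.instance Definition _ := [SubChoice_isSubLmodule of upsT by <:].

End Upsilon.

Arguments ex {k E} N x n.
Arguments ups_pred {k E} N x.
Arguments upsT {k E} N x.
Arguments UpsT {k E N x} uval _.
Arguments uval {k E N x} u.

Section UpsilonModule.
Variables (k : fieldType) (E : kcat k) (N : rcomod E).

Lemma ups_act_in x y (m : upsT N y) (f : chom E x y) :
  rho N (uval m) f \in ups_pred N x.
Proof.
by rewrite unfold_in /ups_pred /ex rho_coassoc comp1f.
Qed.

Definition ups_act x y (m : upsT N y) (f : chom E x y) : upsT N x :=
  UpsT _ (ups_act_in m f).

Lemma ups_act_linl x y (f : chom E x y) (a : k) (m1 m2 : upsT N y) :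
  ups_act (a *: m1 + m2) f = a *: ups_act m1 f + ups_act m2 f.
Proof. by apply: val_inj => /=; rewrite rho_linl. Qed.

Lemma ups_act_linr x y (m : upsT N y) (a : k) (f1 f2 : chom E x y) :
  ups_act m (a *: f1 + f2) = a *: ups_act m f1 + ups_act m f2.
Proof. by apply: val_inj => /=; rewrite rho_linr. Qed.

Lemma ups_act_id x (m : upsT N x) : ups_act m (cid x) = m.
Proof. by apply: val_inj; case: m => n /= /eqP. Qed.

Lemma ups_act_comp x y z (g : chom E x y) (h : chom E y z) (m : upsT N z) :
  ups_act (ups_act m h) g = ups_act m (ccomp g h).
Proof. by apply: val_inj; rewrite /= rho_coassoc. Qed.

Definition Upsilon : rmod E :=
  RMod ups_act_linl ups_act_linr ups_act_id ups_act_comp.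

(* N is locally finite iff Upsilon(N) is *)
Definition locally_finite_comod : Prop := locally_finite_rmod Upsilon.

End UpsilonModule.

Definition in_ups_class (k : fieldType) (E : kcat k) (M : rmod E) : Prop :=
  exists N : rcomod E, locally_finite_comod N /\ rmod_iso M (Upsilon N).

(* Main.v *)
Require Import Defs.
From HB Require Import structures.
From mathcomp Require Import all_boot all_algebra.
From mathcomp Require boolp.
From Stdlib Require List.

Set Implicit Arguments.
Unset Strict Implicit.
Unset Printing Implicit Defensive.
Import GRing.Theory.
Local Open Scope ring_scope.

Section Generic.
Variable k : fieldType.

Lemma list_union (X T : Type) (l : seq X) (A : X -> T -> Prop) :
  (forall t, List.In t l -> exists s, forall x, ~ List.In x s -> A t x) ->
  exists s, forall t, List.In t l -> forall x, ~ List.In x s -> A t x.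
Proof.
elim: l => [|t l IH] H; first by exists [::].
have [s1 H1] := H t (or_introl erefl).
have [s2 H2] : exists s, forall t, List.In t l -> forall x, ~ List.In x s -> A t x.
  by apply: IH => t' Ht'; apply: H; right.
exists (s1 ++ s2) => t' [<-|Ht'] x Hx.
  by apply: H1 => Hx1; apply: Hx; apply: List.in_or_app; left.
by apply: H2 => // Hx2; apply: Hx; apply: List.in_or_app; right.
Qed.

Lemma In_mem (T : eqType) (x : T) (s : seq T) : x \in s -> List.In x s.
Proof.
elim: s => //= y s IH; rewrite inE => /orP [/eqP ->|/IH]; auto.
Qed.

Lemma ord_union (T : Type) n (A : 'I_n -> T -> Prop) :
  (forall i, exists s, forall x, ~ List.In x s -> A i x) ->
  exists s, forall i, forall x, ~ List.In x s -> A i x.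
Proof.
move=> H; have [s Hs] := @list_union _ _ (enum 'I_n) A (fun t _ => H t).
exists s => i; apply: Hs; apply: In_mem; by rewrite mem_enum.
Qed.

Lemma big_seq0 (V : zmodType) (X : Type) (l : seq X) (F : X -> V) :
  (forall t, List.In t l -> F t = 0) -> \sum_(t <- l) F t = 0.
Proof.
elim: l => [|t l IH] H; first by rewrite big_nil.
rewrite big_cons H ?add0r; last by left.
by apply: IH => t' Ht'; apply: H; right.
Qed.

Section Lin.
Variables (V W : lmodType k) (F : V -> W).
Hypothesis HF : forall a v w, F (a *: v + w) = a *: F v + F w.
Lemma lin0 : F 0 = 0.
Proof.
have := HF (-1) 0 0; rewrite scaler0 addr0 => /eqP.
by rewrite scaleN1r eq_sym addNr eq_sym => /eqP.
Qed.
Lemma linD v w : F (v + w) = F v + F w.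
Proof. by have := HF 1 v w; rewrite !scale1r. Qed.
Lemma linZ a v : F (a *: v) = a *: F v.
Proof. by have := HF a v 0; rewrite !addr0 lin0 addr0. Qed.
Lemma lin_sum (I : Type) (r : seq I) (c : I -> k) (G : I -> V) :
  F (\sum_(i <- r) c i *: G i) = \sum_(i <- r) c i *: F (G i).
Proof.
rewrite (big_morph F linD lin0); apply: eq_bigr => i _; exact: linZ.
Qed.
End Lin.

Lemma findim_surj (V W : lmodType k) (F : V -> W) :
  (forall a v w, F (a *: v + w) = a *: F v + F w) ->
  (forall w, exists v, F v = w) -> findim V -> findim W.
Proof.
move=> HF Hs [n [b Hb]]; exists n, (fun i => F (b i)) => w.
have [v <-] := Hs w; have [c ->] := Hb v; exists c.
exact: lin_sum.
Qed.

End Generic.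

Section Cons.
Variables (k : fieldType) (E : kcat k) (M : rmod E).

Definition dfun := forall x : cobj E, mval M x.
Record fsT := FS { fsv : dfun;
  fsP : exists s : seq (cobj E), forall x, ~ List.In x s -> fsv x = 0 }.

Lemma fs_ext (u v : fsT) : (forall x, fsv u x = fsv v x) -> u = v.
Proof.
case: u => fu pu; case: v => fv pv /= H.
have e : fu = fv by apply: boolp.functional_extensionality_dep.
subst fv; by rewrite (boolp.Prop_irrelevance pu pv).
Qed.

HB.instance Definition _ := boolp.gen_eqMixin fsT.
HB.instance Definition _ := boolp.gen_choiceMixin fsT.

Definition fs0 : fsT := @FS (fun x => 0) (ex_intro _ [::] (fun _ _ => erefl)).

Lemma fsaddP (u v : fsT) : exists s : seq (cobj E), forall x, ~ List.In x s ->
  fsv u x + fsv v x = 0.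
Proof.
case: u => fu [s1 H1]; case: v => fv [s2 H2] /=; exists (s1 ++ s2) => x Hx.
rewrite H1 ?H2 ?addr0 // => H; apply: Hx; apply: List.in_or_app; auto.
Qed.
Definition fsadd (u v : fsT) : fsT := FS (fsaddP u v).

Lemma fsoppP (u : fsT) : exists s : seq (cobj E), forall x, ~ List.In x s ->
  - fsv u x = 0.
Proof. case: u => fu [s1 H1]; exists s1 => x Hx /=; by rewrite H1 ?oppr0. Qed.
Definition fsopp (u : fsT) : fsT := FS (fsoppP u).

Lemma fsscaleP (c : k) (u : fsT) : exists s : seq (cobj E), forall x, ~ List.In x s ->
  c *: fsv u x = 0.
Proof. case: u => fu [s1 H1]; exists s1 => x Hx /=; by rewrite H1 ?scaler0. Qed.
Definition fsscale c (u : fsT) : fsT := FS (fsscaleP c u).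

Lemma fsaddA : associative fsadd.
Proof. by move=> u v w; apply: fs_ext => x /=; rewrite addrA. Qed.
Lemma fsaddC : commutative fsadd.
Proof. by move=> u v; apply: fs_ext => x /=; rewrite addrC. Qed.
Lemma fsadd0 : left_id fs0 fsadd.
Proof. by move=> u; apply: fs_ext => x /=; rewrite add0r. Qed.
Lemma fsaddN : left_inverse fs0 fsopp fsadd.
Proof. by move=> u; apply: fs_ext => x /=; rewrite addNr. Qed.

HB.instance Definition _ := GRing.isZmodule.Build fsT fsaddA fsaddC fsadd0 fsaddN.

Lemma fsscaleA a b v : fsscale a (fsscale b v) = fsscale (a * b) v.
Proof. by apply: fs_ext => x /=; rewrite scalerA. Qed.
Lemma fsscale1 : left_id 1 fsscale.
Proof. by move=> u; apply: fs_ext => x /=; rewrite scale1r. Qed.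
Lemma fsscaleDr : right_distributive fsscale +%R.
Proof. by move=> a u v; apply: fs_ext => x /=; rewrite scalerDr. Qed.
Lemma fsscaleDl v : {morph fsscale^~ v: a b / a + b}.
Proof. by move=> a b; apply: fs_ext => x /=; rewrite scalerDl. Qed.

HB.instance Definition _ := GRing.Zmodule_isLmodule.Build k fsT
  fsscaleA fsscale1 fsscaleDr fsscaleDl.

Lemma fsvD (u v : fsT) x : fsv (u + v) x = fsv u x + fsv v x. Proof. by []. Qed.
Lemma fsvZ c (u : fsT) x : fsv (c *: u) x = c *: fsv u x. Proof. by []. Qed.
Lemma fsv0 x : fsv (0 : fsT) x = 0. Proof. by []. Qed.
Lemma fsv_sum (I : Type) (r : seq I) (F : I -> fsT) x :
  fsv (\sum_(i <- r) F i) x = \sum_(i <- r) fsv (F i) x.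
Proof. exact: (big_morph (fun u : fsT => fsv u x) (fun u v => fsvD u v x) (fsv0 x)). Qed.

Definition delta x (v : mval M x) : dfun := fun z =>
  match boolp.pselect (x = z) with
  | left e => eq_rect x (mval M) v z e
  | right _ => 0
  end.

Lemma delta_xx x (v : mval M x) : delta v x = v.
Proof.
rewrite /delta; case: boolp.pselect => // e.
by rewrite (boolp.Prop_irrelevance e erefl).
Qed.
Lemma delta_ne x (v : mval M x) z : x <> z -> delta v z = 0.
Proof. by rewrite /delta; case: boolp.pselect. Qed.

Lemma deltaP x (v : mval M x) : exists s : seq (cobj E), forall z, ~ List.In z s ->
  delta v z = 0.
Proof. exists [:: x] => z Hz; apply: delta_ne => e; apply: Hz; by left. Qed.
Definition dl x (v : mval M x) : fsT := FS (deltaP v).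

Lemma dl_lin x a (v w : mval M x) : dl (a *: v + w) = a *: dl v + dl w.
Proof.
apply: fs_ext => z /=; rewrite /delta; case: boolp.pselect => [e|_].
  by case: z / e.
by rewrite scaler0 addr0.
Qed.
Lemma dl0 x : dl (0 : mval M x) = 0.
Proof. exact: (lin0 (@dl_lin x)). Qed.

Lemma mact0l x y (f : chom E x y) : mact M (0 : mval M y) f = 0.
Proof. exact: (@lin0 k _ _ (fun m => mact M m f) (fun a v w => mact_linl f a v w)). Qed.
Lemma mact0r x y (m : mval M y) : mact M m (0 : chom E x y) = 0.
Proof. exact: (@lin0 k _ _ (fun f => mact M m f) (fun a v w => mact_linr m a v w)). Qed.

Definition rh x y (n : fsT) (f : chom E x y) : fsT := dl (mact M (fsv n y) f).

Lemma rh_linl x y (f : chom E x y) (a : k) (n1 n2 : fsT) :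
  rh (a *: n1 + n2) f = a *: rh n1 f + rh n2 f.
Proof. by rewrite /rh fsvD fsvZ mact_linl dl_lin. Qed.
Lemma rh_linr x y (n : fsT) (a : k) (f1 f2 : chom E x y) :
  rh n (a *: f1 + f2) = a *: rh n f1 + rh n f2.
Proof. by rewrite /rh mact_linr dl_lin. Qed.

Hypothesis hfs : forall y (m : mval M y), exists s : seq (cobj E),
  forall x (f : chom E x y), ~ List.In x s -> mact M m f = 0.

Lemma rh_fin (n : fsT) : exists s : seq (cobj E * cobj E)%type,
      forall x y, ~ List.In (x, y) s -> forall f : chom E x y, rh n f = 0.
Proof.
case: n => fn [s0 H0].
have [s1 H1] := @list_union _ _ s0
  (fun y x => forall f : chom E x y, mact M (fn y) f = 0)
  (fun y _ => let: ex_intro s Hs := hfs (fn y) in ex_intro _ s (fun x Hx f => Hs x f Hx)).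
exists (List.list_prod s1 s0) => x y Hxy f; rewrite /rh /=.
have [Hy|Hy] := boolp.pselect (List.In y s0).
  have [Hx|Hx] := boolp.pselect (List.In x s1).
    by exfalso; apply: Hxy; apply: List.in_prod.
  by rewrite H1 // dl0.
by rewrite H0 // mact0l dl0.
Qed.

Lemma sum_delta_notin (s : seq (cobj E)) (g : dfun) z : ~ List.In z s ->
  \sum_(x <- s) delta (g x) z = 0.
Proof.
move=> H; apply: big_seq0 => x Hx; apply: delta_ne => e; subst; exact: H.
Qed.

Lemma sum_delta_in (s : seq (cobj E)) (g : dfun) z : List.NoDup s -> List.In z s ->
  \sum_(x <- s) delta (g x) z = g z.
Proof.
elim: s => [|x s IH] //= /List.NoDup_cons_iff [Hx Hs] Hz.
rewrite big_cons; case: Hz => [e|Hz].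
  by subst z; rewrite delta_xx sum_delta_notin // addr0.
rewrite (@delta_ne x) ?add0r ?IH //.
  move=> e; subst; exact: Hx.
Qed.

Lemma rh_counit (n : fsT) (s : seq (cobj E)) : List.NoDup s ->
      (forall x, ~ List.In x s -> rh n (cid x) = 0) ->
      \sum_(x <- s) rh n (cid x) = n.
Proof.
move=> Hs H; apply: fs_ext => z; rewrite fsv_sum.
under eq_bigr do rewrite /rh /= mact_id.
have [Hz|Hz] := boolp.pselect (List.In z s).
  exact: (sum_delta_in (fsv n) Hs Hz).
rewrite (sum_delta_notin (fsv n)) //.
have := H z Hz; rewrite /rh mact_id => /(congr1 (fun u : fsT => fsv u z)).
by rewrite /= delta_xx.
Qed.

Lemma rh_coassoc x z y (g : chom E x z) (h : chom E z y) (n : fsT) :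
      rh (rh n h) g = rh n (ccomp g h).
Proof. by rewrite /rh /= delta_xx mact_comp. Qed.

Lemma rh_coassoc0 a b c d (g : chom E a b) (h : chom E c d) (n : fsT) :
      b <> c -> rh (rh n h) g = 0.
Proof.
move=> H; rewrite /rh /= delta_ne; last by move=> e; apply: H.
by rewrite mact0l dl0.
Qed.

Definition Ccomod : rcomod E :=
  @RComod k E fsT rh rh_linl rh_linr rh_fin rh_counit rh_coassoc rh_coassoc0.

End Cons.

Section Iso.
Variables (k : fieldType) (E : kcat k) (M : rmod E).
Hypothesis hfs : forall y (m : mval M y), exists s : seq (cobj E),
  forall x (f : chom E x y), ~ List.In x s -> mact M m f = 0.
Hypothesis hfd : locally_finite_rmod M.

Let C := Ccomod hfs.

Lemma phi_in x (v : mval M x) : (dl v : cval C) \in ups_pred C x.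
Proof.
rewrite unfold_in /ups_pred /ex; apply/eqP => /=.
by rewrite /rh /= delta_xx mact_id.
Qed.

Definition phi x (v : mval M x) : upsT C x := UpsT _ (phi_in v).

Lemma phi_lin x : linear_for *:%R (@phi x).
Proof. by move=> c u v; apply: val_inj => /=; rewrite dl_lin. Qed.

HB.instance Definition _ x := GRing.isLinear.Build k (mval M x) (upsT C x) _ (@phi x) (@phi_lin x).

Lemma phi_nat x y (f : chom E x y) (m : mval M y) :
  phi (mact M m f) = mact (Upsilon C) (phi m) f.
Proof. by apply: val_inj => /=; rewrite /rh /= delta_xx. Qed.

Definition phiH : rmod_hom M (Upsilon C) := @RModHom _ _ M (Upsilon C) (fun x => @phi x) phi_nat.

Lemma phi_bij x : bijective (mhom phiH x).
Proof.
exists (fun u : upsT C x => fsv (uval u) x).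
  by move=> v /=; rewrite delta_xx.
move=> u; apply: val_inj => /=.
case: u => n /= /eqP Hn.
rewrite -[RHS]Hn /ex /= /rh mact_id.
by apply: fs_ext => z.
Qed.

Lemma M_in_class : in_ups_class M.
Proof.
exists C; split; last by exists phiH; exact: phi_bij.
move=> x; apply: (@findim_surj _ _ _ (@phi x)) (hfd x).
  by move=> a v w; rewrite phi_lin.
move=> u; have [g Hg1 Hg2] := phi_bij x; exists (g u); exact: Hg2.
Qed.

End Iso.

Lemma size_filter_le (T : Type) (p q : pred T) (s : seq T) :
  (forall w, p w -> q w) -> (size (filter p s) <= size (filter q s))%N.
Proof.
move=> H; elim: s => //= w s IH.
case Hp: (p w); first by rewrite (H _ Hp).
by case: (q w) => //=; apply: leqW.
Qed.

Lemma size_filter_lt (T : Type) (p q : pred T) (s : seq T) :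
  (forall w, p w -> q w) -> forall w, List.In w s -> q w -> ~~ p w ->
  (size (filter p s) < size (filter q s))%N.
Proof.
move=> H w; elim: s => //= v s IH [e|Hw] Hq Hp.
  subst v; rewrite Hq (negbTE Hp) /=; rewrite ltnS; exact: size_filter_le.
case Hpv: (p v); first by rewrite (H _ Hpv) /= ltnS; apply: IH.
case: (q v) => /=; last by apply: IH.
by apply: (leq_trans (IH Hw Hq Hp)).
Qed.

Section ClassLemmas.
Variables (k : fieldType) (E : kcat k).

Lemma inv_lin (V W : lmodType k) (f : {linear V -> W}) (g : W -> V) :
  cancel f g -> cancel g f ->
  forall a u w, g (a *: u + w) = a *: g u + g w.
Proof.
move=> H1 H2 a u w; apply: (can_inj H1).
by rewrite linearP !H2.
Qed.

Lemma class_findim (P : rmod E) : in_ups_class P -> locally_finite_rmod P.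
Proof.
move=> [NP [lfN [phi bij]]] x.
have [g H1 H2] := bij x.
apply: (findim_surj (inv_lin H1 H2)) (lfN x).
by move=> w; exists (mhom phi x w); rewrite H1.
Qed.

Definition fin_supp (P : rmod E) y (p : mval P y) :=
  exists s : seq (cobj E), forall x (f : chom E x y), ~ List.In x s -> mact P p f = 0.

Lemma class_supp (P : rmod E) : in_ups_class P -> forall y (p : mval P y), fin_supp p.
Proof.
move=> [NP [_ [phi bij]]] y p.
have [s Hs] := rho_fin (uval (mhom phi y p)).
exists (List.map fst s) => x f Hx.
apply: (bij_inj (bij x)); rewrite mhom_nat linear0.
apply: val_inj => /=; apply: Hs => H; apply: Hx.
exact: (List.in_map fst s (x, y) H).
Qed.

Lemma prec_trans (w x z : cobj E) : prec w x -> prec x z -> prec w z.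
Proof.
move=> [H1 H2] [H3 H4]; split; first exact: Relation_Operators.t_trans H1 H3.
move=> H5; apply: H4; exact: Relation_Operators.t_trans H5 H1.
Qed.

Lemma prec_irr (x : cobj E) : ~ prec x x.
Proof. by move=> [H1 H2]. Qed.

End ClassLemmas.

Section Main.
Variables (k : fieldType) (E : kcat k).
Hypothesis hE : left_strictly_locally_finite E.
Variables (L M N : rmod E) (a : rmod_hom L M) (b : rmod_hom M N).
Hypothesis hex : short_exact a b.
Hypothesis hL : in_ups_class L.
Hypothesis hN : in_ups_class N.

Lemma M_findim : locally_finite_rmod M.
Proof.
move=> x.
have [nL [bL HL]] := class_findim hL x.
have [nN [bN HN]] := class_findim hN x.
have [_ [hsurj hker]] := hex x.
have [lift Hlift] := boolp.choice (fun i : 'I_nN => hsurj (bN i)).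
exists (nL + nN)%N, (fun i => match split i with inl j => mhom a x (bL j) | inr j => lift j end).
move=> m.
have [cN HcN] := HN (mhom b x m).
have H0 : mhom b x (m - \sum_(i < nN) cN i *: lift i) = 0.
  by rewrite linearB linear_sum /= HcN; under eq_bigr do rewrite linearZ Hlift; rewrite subrr.
have [l Hl] := (hker _).1 H0.
have [cL HcL] := HL l.
exists (fun i => match split i with inl j => cL j | inr j => cN j end).
rewrite big_split_ord /=.
under eq_bigr do rewrite (unsplitK (inl _)).
under [X in _ = _ + X]eq_bigr do rewrite (unsplitK (inr _)).
have -> : \sum_(i < nL) cL i *: mhom a x (bL i) = mhom a x l.
  by rewrite HcL linear_sum; apply: eq_bigr => i _; rewrite linearZ.
by rewrite Hl subrK.
Qed.

Lemma suppA y (m : mval M y) : (exists l, mhom a y l = m) -> fin_supp m.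
Proof.
move=> [l <-]; have [s Hs] := class_supp hL l.
by exists s => x f Hx; rewrite -mhom_nat Hs // linear0.
Qed.

Lemma mact_sum_r x y (u : mval M y) (I : Type) (r : seq I) (F : I -> chom E x y) :
  mact M u (\sum_(i <- r) F i) = \sum_(i <- r) mact M u (F i).
Proof.
elim: r => [|i r IH]; first by rewrite !big_nil mact0r.
by rewrite !big_cons (@linD k (chom E x y) (mval M x) (fun f => mact M u f) (fun a v w => mact_linr u a v w)) IH.
Qed.

Lemma M_supp y (m : mval M y) : fin_supp m.
Proof.
have [S HS] := class_supp hN (mhom b y m).
pose P z := forall f0 : chom E z y, fin_supp (mact M m f0).
have notS z : ~ List.In z S -> P z.
  move=> Hz f0; apply: suppA; apply: ((hex z).2.2 _).1.
  by rewrite mhom_nat HS.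
pose mu z := size (filter (fun w => boolp.asbool (prec w z)) S).
have mu_lt xi z : prec xi z -> List.In xi S -> (mu xi < mu z)%N.
  move=> Hp Hin; apply: (@size_filter_lt _ _ _ S _ xi Hin).
  - move=> w /boolp.asboolP Hw; apply/boolp.asboolP; exact: prec_trans Hw Hp.
  - exact/boolp.asboolP.
  - by apply/boolp.asboolP; apply: prec_irr.
have [[homfin intfin] hX] := hE.
have step z : (forall xi, prec xi z -> List.In xi S -> P xi) -> P z.
  move=> IH f0; set u := mact M m f0.
  have Pall xi : prec xi z -> P xi.
    move=> Hp; have [Hin|Hin] := boolp.pselect (List.In xi S).
      exact: IH. exact: notS.
  have [Bz HBz] := intfin z z.
  have [Xz [HX1 HX2]] := hX z.
  have Hunif xi : List.In xi Xz -> exists s : seq (cobj E), forall x, ~ List.In x s ->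
      forall (h : chom E xi z) (g : chom E x xi), mact M (mact M u h) g = 0.
    move=> Hxi; have [n [bb Hbb]] := homfin xi z.
    have Hi : forall i : 'I_n, exists s : seq (cobj E), forall x, ~ List.In x s ->
        forall g : chom E x xi, mact M (mact M u (bb i)) g = 0.
      move=> i; have [s Hs] := Pall xi (HX1 xi Hxi) (ccomp (bb i) f0).
      by exists s => x Hx g; rewrite /u [mact M (mact M m f0) (bb i)]mact_comp Hs.
    have [s Hs] := ord_union Hi.
    exists s => x Hx h g; have [c ->] := Hbb h.
    rewrite (lin_sum (fun a v w => mact_linr u a v w)).
    rewrite (lin_sum (fun a v w => mact_linl g a v w)).
    by apply: big1 => i _; rewrite Hs // scaler0.
  have [U HU] := list_union Hunif.
  exists (Bz ++ U) => x f Hx.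
  case: (eqVneq f 0) => [->|fnz]; first exact: mact0r.
  have Hp : preceq x z by apply: Relation_Operators.t_step; exists f.
  have [Hzx|Hzx] := boolp.pselect (preceq z x).
    by exfalso; apply: Hx; apply: List.in_or_app; left; apply: HBz.
  have [l [Hl1 Hl2]] := HX2 x f (conj Hp Hzx).
  rewrite Hl2 mact_sum_r; apply: big_seq0 => t Ht.
  rewrite -mact_comp; apply: (HU (fmid t) (Hl1 t Ht)) => HxU.
  by apply: Hx; apply: List.in_or_app; right.
have main n : forall z, (mu z < n)%N -> P z.
  elim: n => [//|n IHn] z Hz; apply: step => xi Hp Hin; apply: IHn.
  by apply: leq_trans (mu_lt _ _ Hp Hin) _.
have := main (mu y).+1 y (ltnSn _) (cid y).
by rewrite mact_id.
Qed.

End Main.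

Theorem corollary6p4 (k : fieldType) (E : kcat k)
  (hE : left_strictly_locally_finite E)
  (L M N : rmod E) (a : rmod_hom L M) (b : rmod_hom M N) :
  short_exact a b -> in_ups_class L -> in_ups_class N -> in_ups_class M.
Proof.
move=> hex hL hN.
exact: (M_in_class (M_supp hE hex hL hN) (M_findim hex hL hN)).
Qed.
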